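(* Let $q$ be a prime power and let $C\subseteq\mathrm{GF}(q^m)^n$ be a (linear or nonlinear) code with $n\le m$, $|C|=q^{mk}$ for an integer $1\le k\le n$, and minimum rank distance $d_{\mathrm R}=n-k+1$; let $r=n-k$. For an integer $u$ let $A_u$ be the number of codewords of $C$ of rank $u$. Then for every $u$ with $d_{\mathrm R}\le u\le n$, $$A_u\le{n\brack u}A(m,u-r).$$
   Context: For $\mathbf x=(x_0,\dots,x_{n-1})\in\mathrm{GF}(q^m)^n$, $\mathrm{rk}(\mathbf x)$ is the dimension over $\mathrm{GF}(q)$ of the $\mathrm{GF}(q)$-span of $x_0,\dots,x_{n-1}$; the minimum rank distance of $C$ is the minimum of $\mathrm{rk}(\mathbf c-\mathbf d)$ over distinct codewords. $A(m,0)=1$, $A(m,j)=\prod_{i=0}^{j-1}(q^m-q^i)$ for $j\ge1$, and ${n\brack u}=A(n,u)/A(u,u)$. *)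

(* Defs.v *)
From HB Require Import structures.
From mathcomp Require Import all_boot all_order all_algebra all_field.
Set Implicit Arguments. Unset Strict Implicit. Unset Printing Implicit Defensive.
Import GRing.Theory.
Local Open Scope ring_scope.

(* Setting: F = GF(q) is a finite field (q = #|F|), L = GF(q^m) is a field
   extension of F of degree m.  Vectors of L^n are row vectors 'rV[L]_n. *)

Definition rk (F : finFieldType) (L : fieldExtType F) (n : nat) (x : 'rV[L]_n) : nat :=
  \dim <<[seq x ord0 i | i <- enum 'I_n]>>%VS.

Definition Acount (q m j : nat) : nat := (\prod_(i < j) (q ^ m - q ^ i))%N.

Definition gbinom (q n u : nat) : nat := (Acount q n u %/ Acount q u u)%N.

Definition weight_count (F : finFieldType) (L : fieldExtType F) (n : nat)
  (C : seq 'rV[L]_n) (u : nat) : nat := count (fun c => rk c == u) C.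

(* Main.v *)
Require Import Defs.
From HB Require Import structures.
From mathcomp Require Import all_boot all_order all_algebra all_field.
From mathcomp Require Import zify.
Import GRing.Theory.
Import VectorInternalTheory.
Local Open Scope ring_scope.

Set Implicit Arguments.

Lemma card_row_free (F : finFieldType) n m : (m <= n)%N ->
  #|[pred A : 'M[F]_(m, n) | row_free A]| = Acount #|F| n m.
Proof.
set p := #|F|.
elim: m => [_ | m IHm /ltnW-le_mn].
  rewrite /Acount big_ord0 (@eq_card1 _ (0 : 'M_(0, n))) // => A.
  by rewrite flatmx0 !inE /row_free mxrank.unlock !eqxx.
rewrite /Acount big_ord_recr /= -/(Acount p n m) -{}IHm //.
have -> : #|[pred A : 'M[F]_(m.+1, n) | row_free A]| = #|[pred A : 'M[F]_(1 + m, n) | \rank A == (1 + m)%N]| by [].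
rewrite -sum1_card.
rewrite (partition_big dsubmx [pred A : 'M[F]_(m, n) | row_free A]) /= => [|A]; last first.
  rewrite !inE -{1}(vsubmxK A); move: {A}(_ A) (_ A) => Ad Au Afull.
  rewrite /row_free eqn_leq rank_leq_row -(leq_add2l (\rank Au)) -mxrank_sum_cap.
  rewrite {1 3}[@mxrank]lock addsmxE (eqnP Afull) -lock -addnA.
  by rewrite leq_add ?rank_leq_row ?leq_addr.
rewrite -sum_nat_const.
apply: eq_bigr => A rAm; rewrite (reindex (col_mx^~ A)) /=; last first.
  exists usubmx => [v _ | vA]; first by rewrite col_mxKu.
  by case/andP=> _ /eqP <-; rewrite vsubmxK.
transitivity #|~: [set v *m A | v in 'rV_m]|; last first.
  rewrite cardsCs setCK card_imset ?card_mx ?card_ord ?mul1n //.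
  have [B AB1] := row_freeP rAm; apply: can_inj (mulmx^~ B) _ => v.
  by rewrite -mulmxA AB1 mulmx1.
rewrite -sum1_card; apply: eq_bigl => v; rewrite !inE col_mxKd eqxx.
rewrite andbT /row_free eqn_leq rank_leq_row /= -(leq_add2r (\rank (v :&: A)%MS)).
rewrite -addsmxE mxrank_sum_cap (eqnP rAm) addnAC leq_add2r.
rewrite (ltn_leqif (mxrank_leqif_sup _)) ?capmxSl // sub_capmx submx_refl.
by congr (~~ _); apply/submxP/imsetP=> [] [u]; exists u.
Qed.

Set Implicit Arguments.

Section S.
Variables (F : finFieldType) (L : fieldExtType F) (n : nat).

Definition Mx (x : 'rV[L]_n) : 'M[F]_(n, dim L) := \matrix_(i < n) v2r (x ord0 i).

Lemma rkE x : rk x = \rank (Mx x).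
Proof.
rewrite /rk unlock /= /dimv mxrank_gen; apply: eqmx_rank.
set X := [seq x ord0 i | i <- enum 'I_n].
apply/andP; split; apply/row_subP => i.
  rewrite rowK.
  have /mapP[j _ ->] : tnth (in_tuple X) i \in X by apply: mem_tnth.
  by rewrite -(rowK (fun j => v2r (x ord0 j))) row_sub.
rewrite rowK.
have : x ord0 i \in in_tuple X by apply/mapP; exists i; rewrite ?mem_enum.
case/tnthP => j ->.
by rewrite -(rowK (fun j => v2r (tnth (in_tuple X) j))) row_sub.
Qed.

Lemma MxB x y : Mx (x - y) = Mx x - Mx y.
Proof. by apply/matrixP => i j; rewrite !mxE linearB /= !mxE. Qed.
End S.
Arguments Mx {F L n} x.
Arguments rkE {F L n} x.
Arguments MxB {F L n} x y.

Set Implicit Arguments.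

Section S.
Variables (F : finFieldType) (n u r : nat).

Definition rep (V : 'M[F]_n) : 'M_(u, n) := pid_mx u *m row_base V.
Definition KK (V : 'M[F]_n) : 'M_n := kermx V^T.
Definition WW (V : 'M[F]_n) : 'M_(u - r, n) := pid_mx (u - r) *m row_base ((KK V)^C)%MS.

Lemma rep_free V : \rank V = u -> row_free (rep V) /\ (rep V :=: V)%MS.
Proof.
move=> rV.
have full : row_full (pid_mx u : 'M[F]_(u, \rank V)).
  by rewrite /row_full rank_pid_mx ?rV.
have E : (rep V :=: V)%MS.
  by rewrite /rep; apply: eqmx_trans (eqmxMfull _ full) (eq_row_base V).
by split=> //; rewrite /row_free E rV.
Qed.

Lemma rankKK V : \rank V = u -> \rank (KK V) = (n - u)%N.
Proof. by move=> rV; rewrite /KK mxrank_ker mxrank_tr rV. Qed.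

Lemma WW_props V : \rank V = u -> (u <= n)%N ->
  \rank (WW V) = (u - r)%N /\ (WW V :&: KK V <= (0 : 'M[F]_n))%MS.
Proof.
move=> rV un.
have rC : \rank ((KK V)^C)%MS = u by rewrite mxrank_compl rankKK //; lia.
split.
  by rewrite /WW mxrankMfree ?row_base_free // rank_pid_mx // ?rC leq_subr.
have sub : (WW V <= (KK V)^C)%MS.
  by rewrite /WW (submx_trans (submxMl _ _)) // eq_row_base.
rewrite -(capmx_compl (KK V)) capmxC.
by apply: capmxS.
Qed.
End S.


Definition SS (F : finFieldType) n u : {set 'M[F]_n} :=
  [set V | (\rank V == u) && (<<V>>%MS == V)].

Lemma S_count (F : finFieldType) n u : (u <= n)%N ->
  (#|SS F n u| * Acount #|F| u u <= Acount #|F| n u)%N.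
Proof.
move=> un.
rewrite -(@card_row_free F u u (leqnn u)) -(@card_row_free F n u un).
rewrite -(cardsE [pred A : 'M[F]_u | row_free A]) -cardsX.
pose f (p : 'M[F]_n * 'M[F]_u) : 'M[F]_(u, n) := p.2 *m rep F u p.1.
rewrite -(card_in_imset (f := f)); last first.
  move=> [V P] [V' P'] /setXP[/= + PR] /setXP[/= + PR'].
  rewrite !inE in PR PR' * => /andP[/eqP rV /eqP gV] /andP[/eqP rV' /eqP gV'] /= E.
  have [fV eV] := rep_free rV; have [fV' eV'] := rep_free rV'.
  have VV : V = V'.
    rewrite -gV -gV'; apply/genmxP.
    have uP : row_full P by rewrite row_full_unit -row_free_unit.
    have uP' : row_full P' by rewrite row_full_unit -row_free_unit.
    apply/eqmxP; apply: eqmx_trans (eqmx_sym eV) _.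
    apply: eqmx_trans (eqmx_sym (eqmxMfull (rep F u V) uP)) _.
    rewrite /f /= in E; rewrite E.
    by apply: eqmx_trans (eqmxMfull _ uP') eV'.
  subst V'; congr (_, _); exact: (row_free_inj fV) E.
apply: subset_leq_card; apply/subsetP => A /imsetP[[V P] /setXP[/= + PR] ->].
rewrite !inE in PR * => /andP[/eqP rV _].
have [fV eV] := rep_free rV.
have uP : row_full P by rewrite row_full_unit -row_free_unit.
by rewrite /row_free /f /= (eqmxMfull _ uP).
Qed.

Set Implicit Arguments.

Lemma ker_sub (F : fieldType) a b n (X : 'M[F]_(a, n)) (Y : 'M[F]_(b, n)) :
  (X <= Y)%MS -> (kermx Y^T <= kermx X^T)%MS.
Proof.
case/submxP => Z ->; rewrite sub_kermx trmx_mul mulmxA mulmx_ker mul0mx //.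
Qed.

Lemma ker_key (F : finFieldType) n p (A : 'M[F]_(n, p)) :
  (kermx A == KK F <<A^T>>%MS)%MS.
Proof.
rewrite /KK; apply/andP; split.
  by rewrite -{1}(trmxK A); apply: ker_sub; rewrite genmxE.
by rewrite -{2}(trmxK A); apply: ker_sub; rewrite genmxE.
Qed.

Lemma Acount_gt0 (F : finFieldType) u : (0 < Acount #|F| u u)%N.
Proof.
have q1 : (1 < #|F|)%N.
  by apply/card_gt1P; exists 0, 1; rewrite !inE eq_sym oner_eq0.
rewrite /Acount prodn_gt0 // => i; rewrite subn_gt0 ltn_exp2l //.
Qed.

Theorem lemma6 (F : finFieldType) (L : fieldExtType F) (m n k : nat)
  (C : seq 'rV[L]_n) :
  \dim {:L} = m ->
  (n <= m)%N ->
  (1 <= k <= n)%N ->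
  uniq C ->
  size C = (#|F| ^ (m * k))%N ->
  (forall c d, c \in C -> d \in C -> c != d -> (n - k + 1 <= rk (c - d))%N) ->
  (exists c d, [/\ c \in C, d \in C, c != d & rk (c - d) = (n - k + 1)%N]) ->
  forall u : nat, (n - k + 1 <= u <= n)%N ->
    (weight_count C u <= gbinom #|F| n u * Acount #|F| m (u - (n - k)))%N.
Proof.
move=> hD hnm /andP[k1 kn] uC _ dist _ u /andP[hu1 hu2].
set r := (n - k)%N.
have ru : (r < u)%N by rewrite /r; lia.
rewrite mulnC; apply: (@leq_trans (#|SS F n u| * Acount #|F| m (u - r))%N).
  2: rewrite mulnC leq_mul2l leq_divRL ?Acount_gt0 ?S_count ?orbT //.
rewrite -hD dimvf.
rewrite -(@card_row_free F (dim L) (u - r)); last by rewrite -dimvf hD; lia.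
rewrite -(cardsE [pred A : 'M[F]_(u - r, dim L) | row_free A]) -cardsX.
pose key (c : 'rV[L]_n) : 'M[F]_n := <<(Mx c)^T>>%MS.
pose phi c := (key c, WW F u r (key c) *m Mx c).
pose P := fun c : 'rV[L]_n => rk c == u.
have rkey c : rk c = u -> \rank (key c) = u.
  by move=> <-; rewrite /key mxrank_gen mxrank_tr rkE.
have capW c : rk c = u -> (WW F u r (key c) :&: kermx (Mx c) <= (0 : 'M[F]_n))%MS.
  move=> rc; have [_ h] := WW_props r (rkey c rc) hu2.
  apply: submx_trans h; apply: capmxS => //.
  by case/andP: (@ker_key _ _ _ (Mx c)).
have inj : {in filter P C &, injective phi}.
  move=> c d; rewrite !mem_filter => /andP[/eqP rc cC] /andP[/eqP rd dC].
  rewrite /phi => -[kE WE].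
  apply/eqP; apply: contraT => cd.
  have := dist c d cC dC cd; rewrite rkE MxB.
  set E := Mx c - Mx d.
  set V := key c in kE WE.
  set W := WW F u r V in WE.
  have [rW capWK] := WW_props r (rkey c rc) hu2.
  have rK := rankKK (rkey c rc).
  have K0 : forall x, rk x = u -> key x = V -> (KK F V *m Mx x = 0).
    move=> x rx kx; apply/eqP; rewrite -sub_kermx -kx.
    by case/andP: (@ker_key _ _ _ (Mx x)).
  have sub : (W + KK F V <= kermx E)%MS.
    rewrite addsmx_sub !sub_kermx /E !mulmxBr WE -kE subrr eqxx /=.
    by rewrite (K0 c) // (K0 d) // subrr.
  have := mxrankS sub; rewrite mxrank_ker.
  have := mxrank_sum_cap W (KK F V); rewrite rW rK.
  have := mxrankS capWK; rewrite mxrank0 leqn0 => /eqP ->.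
  have := rank_leq_row E.
  lia.
rewrite /weight_count -size_filter -(size_map phi).
have U : uniq (map phi (filter P C)) by rewrite map_inj_in_uniq // filter_uniq.
rewrite -(card_uniqP U).
apply: subset_leq_card; apply/subsetP => x /mapP[c].
rewrite mem_filter => /andP[/eqP rc _] ->.
rewrite !inE /= rkey // eqxx genmx_id eqxx /=.
rewrite /row_free.
have [rW _] := WW_props r (rkey c rc) hu2.
have h := mxrank_mul_ker (WW F u r (key c)) (Mx c).
have := mxrankS (capW c rc); rewrite mxrank0 leqn0 => /eqP h0.
by rewrite h0 addn0 rW in h; rewrite h.
Qed.
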